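(* Let $(b,c)$ be a connected weighted graph over $X$. The following are equivalent: (i) $(b,c)$ is canonically compactifiable; (ii) $\sup_{x,y\in X}\varrho(x,y)<\infty$; (iii) $\sup_{x,y\in X}r(x,y)<\infty$. If $c\equiv0$, these are moreover equivalent to: (iv) $\sup_{x,y\in X}\sigma(x,y)<\infty$ for every pseudometric $\sigma$ on $X$ that is intrinsic with respect to some measure $m$ on $X$ with $m(X)<\infty$.
   Context: Let $X$ be a countably infinite set. A weighted graph $(b,c)$ over $X$ consists of a symmetric $b:X\times X\to[0,\infty)$ with $b(x,x)=0$ and $\sum_{y}b(x,y)<\infty$ for all $x$, and $c:X\to[0,\infty)$. A path is a finite sequence of pairwise distinct vertices with $b(x_{i-1},x_i)>0$; connected means any two distinct vertices are joined by a path. For $f:X\to\mathbb C$ let $\widetilde Q(f)=\frac12\sum_{x,y}b(x,y)|f(x)-f(y)|^2+\sum_x c(x)|f(x)|^2\in[0,\infty]$ and $\widetilde D=\{f:\widetilde Q(f)<\infty\}$. The graph is called canonically compactifiable if $\widetilde D\subseteq\ell^\infty(X)$, i.e. every function of finite energy is bounded. Define $\varrho(x,y)=\sup\{|f(x)-f(y)|:f\in\widetilde D,\ \widetilde Q(f)\le1\}$, and $r(x,x)=0$, $r(x,y)=\sup\{1/\widetilde Q(g):g\in\widetilde D,\ |g(x)-g(y)|=1\}$ for $x\neq y$. A measure on $X$ is $m:X\to[0,\infty)$ with $m(A)=\sum_{x\in A}m(x)$; a pseudometric $\sigma$ is intrinsic with respect to $m$ if $\frac12\sum_y b(x,y)\sigma(x,y)^2\le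 m(x)$ for all $x$. *)

(* Defs.v *)
From Stdlib Require Import Reals Lra List.
Import ListNotations.
Open Scope R_scope.

(* Complex numbers represented as pairs (real part, imaginary part). *)
Definition C := (R * R)%type.
Definition Csub (z w : C) : C := (fst z - fst w, snd z - snd w).
Definition Cabs2 (z : C) : R := fst z * fst z + snd z * snd z.
Definition Cabs (z : C) : R := sqrt (Cabs2 z).

Section Graphs.
Context {X : Type}.

Definition countably_infinite (T : Type) : Prop :=
  exists e : nat -> T, (forall n m, e n = e m -> n = m) /\ (forall x, exists n, e n = x).

Definition lsum (l : list X) (g : X -> R) : R := fold_right (fun x s => g x + s) 0 l.

Definition weighted_graph (b : X -> X -> R) (c : X -> R) : Prop :=
  (forall x y, 0 <= b x y) /\ (forall x y, b x y = b y x) /\ (forall x, b x x = 0) /\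
  (* sum_y b(x,y) < infinity : bounded partial sums over finite sets of distinct vertices *)
  (forall x, exists M, forall l, NoDup l -> lsum l (fun y => b x y) <= M) /\
  (forall x, 0 <= c x).

Fixpoint chain (b : X -> X -> R) (x : X) (l : list X) : Prop :=
  match l with
  | [] => True
  | y :: l' => 0 < b x y /\ chain b y l'
  end.

Definition is_path (b : X -> X -> R) (x y : X) (p : list X) : Prop :=
  NoDup (x :: p) /\ chain b x p /\ last (x :: p) x = y.

Definition connected (b : X -> X -> R) : Prop :=
  forall x y, x <> y -> exists p, is_path b x y p.

Definition Qfin (b : X -> X -> R) (c : X -> R) (l : list X) (f : X -> C) : R :=
  / 2 * lsum l (fun x => lsum l (fun y => b x y * Cabs2 (Csub (f x) (f y))))
  + lsum l (fun x => c x * Cabs2 (f x)).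

(* Qval b c f q : Q~(f) is finite and equals q (supremum of the finite partial sums,
   all terms being nonnegative). *)
Definition Qval (b : X -> X -> R) (c : X -> R) (f : X -> C) (q : R) : Prop :=
  is_lub (fun v => exists l, NoDup l /\ v = Qfin b c l f) q.

Definition inD (b : X -> X -> R) (c : X -> R) (f : X -> C) : Prop := exists q, Qval b c f q.

Definition canonically_compactifiable (b : X -> X -> R) (c : X -> R) : Prop :=
  forall f, inD b c f -> exists M, forall x, Cabs (f x) <= M.

Definition rho_le (b : X -> X -> R) (c : X -> R) (x y : X) (K : R) : Prop :=
  forall f q, Qval b c f q -> q <= 1 -> Cabs (Csub (f x) (f y)) <= K.

(* r(x,y) <= K ; r(x,x) = 0, and 1/Q~(g) = +infinity when Q~(g) = 0 *)
Definition r_le (b : X -> X -> R) (c : X -> R) (x y : X) (K : R) : Prop :=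
  (x = y -> 0 <= K) /\
  (x <> y -> forall g q, Qval b c g q -> Cabs (Csub (g x) (g y)) = 1 -> 0 < q /\ / q <= K).

Definition pseudometric (s : X -> X -> R) : Prop :=
  (forall x y, 0 <= s x y) /\ (forall x, s x x = 0) /\ (forall x y, s x y = s y x) /\
  (forall x y z, s x z <= s x y + s y z).

Definition measure (m : X -> R) : Prop := forall x, 0 <= m x.

Definition finite_measure (m : X -> R) : Prop :=
  exists M, forall l, NoDup l -> lsum l m <= M.

Definition intrinsic (b : X -> X -> R) (m : X -> R) (s : X -> X -> R) : Prop :=
  forall x l, NoDup l -> / 2 * lsum l (fun y => b x y * (s x y) ^ 2) <= m x.

End Graphs.

(* Main.v *)
Require Import Defs.
From Stdlib Require Import Reals List.
From Stdlib Require Import Lra ClassicalEpsilon Classical Lia.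
Import ListNotations.
Open Scope R_scope.

Definition emb {X} (u : X -> R) : X -> Defs.C := fun x => (u x, 0).
Definition scale {X} (t : R) (f : X -> Defs.C) : X -> Defs.C := fun x => (t * fst (f x), t * snd (f x)).

Lemma lsum_cons {X} a l (g : X -> R) : lsum (a::l) g = g a + lsum l g.
Proof. reflexivity. Qed.
Lemma lsum_nil {X} (g : X -> R) : lsum [] g = 0.
Proof. reflexivity. Qed.

Lemma lsum_ext {X} l (g h : X -> R) : (forall x, In x l -> g x = h x) -> lsum l g = lsum l h.
Proof.
  induction l as [|a l IH]; intros H; simpl; auto.
  rewrite (H a (or_introl eq_refl)), IH; auto. intros x Hx; apply H; right; auto.
Qed.

Lemma lsum_le {X} l (g h : X -> R) : (forall x, In x l -> g x <= h x) -> lsum l g <= lsum l h.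
Proof.
  induction l as [|a l IH]; intros H; simpl; [lra|].
  assert (g a <= h a) by (apply H; left; auto).
  assert (lsum l g <= lsum l h) by (apply IH; intros; apply H; right; auto). lra.
Qed.

Lemma lsum_nonneg {X} l (g : X -> R) : (forall x, In x l -> 0 <= g x) -> 0 <= lsum l g.
Proof.
  intros H. replace 0 with (lsum l (fun _ => 0)).
  - apply lsum_le; auto.
  - clear H; induction l; simpl; lra.
Qed.

Lemma lsum_scal {X} l (g : X -> R) k : lsum l (fun x => k * g x) = k * lsum l g.
Proof. induction l; simpl; [ring|]. rewrite IHl; ring. Qed.

Lemma lsum_plus {X} l (g h : X -> R) : lsum l (fun x => g x + h x) = lsum l g + lsum l h.
Proof. induction l; simpl; [ring|]. rewrite IHl; ring. Qed.

Lemma lsum_zero {X} (l : list X) : lsum l (fun _ => 0) = 0.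
Proof. induction l; simpl; auto; lra. Qed.

Lemma lsum_app {X} l1 l2 (g : X -> R) : lsum (l1++l2) g = lsum l1 g + lsum l2 g.
Proof. induction l1; simpl; [ring|]. rewrite IHl1; ring. Qed.

Lemma lsum_sum_f {X} l (g : nat -> X -> R) N :
  lsum l (fun x => sum_f_R0 (fun n => g n x) N) = sum_f_R0 (fun n => lsum l (g n)) N.
Proof.
  induction N; simpl; auto.
  rewrite lsum_plus, IHN. reflexivity.
Qed.

Lemma lsum_in {X} l (g : X -> R) a : In a l -> (forall x, In x l -> 0 <= g x) -> g a <= lsum l g.
Proof.
  induction l as [|y l IH]; intros Ha H; simpl in *; [contradiction|].
  destruct Ha as [->|Ha].
  - assert (0 <= lsum l g) by (apply lsum_nonneg; auto). lra.
  - assert (g a <= lsum l g) by (apply IH; auto). assert (0 <= g y) by auto. lra.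
Qed.

Lemma CV_const (a : R) : Un_cv (fun _ => a) a.
Proof. intros eps He. exists O. intros. unfold R_dist. rewrite Rminus_diag, Rabs_R0. lra. Qed.

Lemma lsum_cv {X} l (g : nat -> X -> R) G :
  (forall x, Un_cv (fun N => g N x) (G x)) -> Un_cv (fun N => lsum l (g N)) (lsum l G).
Proof.
  intros H. induction l as [|a l IH]; simpl.
  - apply CV_const.
  - apply CV_plus; auto.
Qed.

Definition Xdec {X} (x y : X) : {x = y} + {x <> y} := excluded_middle_informative (x = y).

Lemma lsum_remove_le {X} (L : list X) g a : (forall x, 0 <= g x) -> lsum (remove Xdec a L) g <= lsum L g.
Proof.
  intros Hg. induction L as [|y L IH]; simpl; [lra|].
  destruct (Xdec a y).
  - specialize (Hg y). lra.
  - simpl. lra.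
Qed.

Lemma lsum_remove_in {X} (L : list X) g a : (forall x, 0 <= g x) -> In a L ->
  g a + lsum (remove Xdec a L) g <= lsum L g.
Proof.
  intros Hg. induction L as [|y L IH]; simpl; intros Ha; [contradiction|].
  destruct (Xdec a y).
  - subst. pose proof (lsum_remove_le L g y Hg). lra.
  - simpl. destruct Ha as [->|Ha]; [congruence|]. specialize (IH Ha). lra.
Qed.

Lemma lsum_incl {X} (l L : list X) g : (forall x, 0 <= g x) -> NoDup l -> incl l L -> lsum l g <= lsum L g.
Proof.
  intros Hg. revert L. induction l as [|a l IH]; intros L Hnd Hinc; simpl.
  - apply lsum_nonneg; auto.
  - apply NoDup_cons_iff in Hnd as [Hna Hnd].
    assert (Hl : lsum l g <= lsum (remove Xdec a L) g).
    { apply IH; auto. intros x Hx. apply in_in_remove.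
      - intros ->. contradiction.
      - apply Hinc. right; auto. }
    pose proof (lsum_remove_in L g a Hg (Hinc a (or_introl eq_refl))). lra.
Qed.

Lemma sqrt_le_helper x y : 0 <= y -> x <= y * y -> sqrt x <= y.
Proof.
  intros Hy Hx. rewrite <- (sqrt_square y) by auto.
  apply sqrt_le_1_alt; auto.
Qed.

Lemma Rabs_sq a : Rabs a * Rabs a = a * a.
Proof. unfold Rabs; destruct (Rcase_abs a); ring. Qed.

Lemma Cabs2_nonneg z : 0 <= Cabs2 z.
Proof. unfold Cabs2. nra. Qed.
Lemma Cabs_nonneg z : 0 <= Cabs z.
Proof. apply sqrt_pos. Qed.

Lemma Rabs_le_sqrt a s : a * a <= s -> Rabs a <= sqrt s.
Proof.
  intros H. rewrite <- (sqrt_square (Rabs a)) by apply Rabs_pos.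
  apply sqrt_le_1_alt. rewrite Rabs_sq. auto.
Qed.

Lemma Cabs_fst z : Rabs (fst z) <= Cabs z.
Proof. unfold Cabs, Cabs2. apply Rabs_le_sqrt. nra. Qed.
Lemma Cabs_snd z : Rabs (snd z) <= Cabs z.
Proof. unfold Cabs, Cabs2. apply Rabs_le_sqrt. nra. Qed.

Lemma Cabs_le_sum z : Cabs z <= Rabs (fst z) + Rabs (snd z).
Proof.
  unfold Cabs, Cabs2. apply sqrt_le_helper.
  - pose proof (Rabs_pos (fst z)); pose proof (Rabs_pos (snd z)); lra.
  - pose proof (Rabs_sq (fst z)); pose proof (Rabs_sq (snd z));
    pose proof (Rabs_pos (fst z)); pose proof (Rabs_pos (snd z)); nra.
Qed.

Lemma Cabs_real a : Cabs (a, 0) = Rabs a.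
Proof.
  unfold Cabs, Cabs2; simpl. rewrite <- sqrt_Rsqr_abs. unfold Rsqr. f_equal; ring.
Qed.

Lemma Cabs_scale t z : Cabs (t * fst z, t * snd z) = Rabs t * Cabs z.
Proof.
  unfold Cabs, Cabs2; simpl.
  replace (t * fst z * (t * fst z) + t * snd z * (t * snd z))
    with ((t * t) * (fst z * fst z + snd z * snd z)) by ring.
  rewrite sqrt_mult by nra. f_equal. rewrite <- sqrt_Rsqr_abs. reflexivity.
Qed.

Lemma Cabs_sub_self z : Cabs (Csub z z) = 0.
Proof. unfold Cabs, Cabs2, Csub. simpl. replace (_ + _) with 0 by ring. apply sqrt_0. Qed.

Lemma Qfin_nonneg {X} (b : X -> X -> R) c l f :
  (forall x y, 0 <= b x y) -> (forall x, 0 <= c x) -> 0 <= Qfin b c l f.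
Proof.
  intros Hb Hc. unfold Qfin.
  assert (0 <= lsum l (fun x => lsum l (fun y => b x y * Cabs2 (Csub (f x) (f y))))).
  { apply lsum_nonneg; intros; apply lsum_nonneg; intros.
    pose proof (Cabs2_nonneg (Csub (f x) (f x0))); specialize (Hb x x0); nra. }
  assert (0 <= lsum l (fun x => c x * Cabs2 (f x))).
  { apply lsum_nonneg; intros. pose proof (Cabs2_nonneg (f x)); specialize (Hc x); nra. }
  lra.
Qed.

Lemma Qfin_compare {X} (b : X -> X -> R) c l f g :
  (forall x y, 0 <= b x y) -> (forall x, 0 <= c x) ->
  (forall x y, Cabs2 (Csub (g x) (g y)) <= Cabs2 (Csub (f x) (f y))) ->
  (forall x, Cabs2 (g x) <= Cabs2 (f x)) -> Qfin b c l g <= Qfin b c l f.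
Proof.
  intros Hb Hc H1 H2. unfold Qfin.
  assert (lsum l (fun x => lsum l (fun y => b x y * Cabs2 (Csub (g x) (g y)))) <=
          lsum l (fun x => lsum l (fun y => b x y * Cabs2 (Csub (f x) (f y))))).
  { apply lsum_le; intros; apply lsum_le; intros.
    specialize (H1 x x0); specialize (Hb x x0); nra. }
  assert (lsum l (fun x => c x * Cabs2 (g x)) <= lsum l (fun x => c x * Cabs2 (f x))).
  { apply lsum_le; intros. specialize (H2 x); specialize (Hc x); nra. }
  lra.
Qed.

Lemma Qfin_scale {X} (b : X -> X -> R) c l f t :
  Qfin b c l (scale t f) = t * t * Qfin b c l f.
Proof.
  unfold Qfin.
  rewrite (lsum_ext l (fun x => lsum l (fun y => b x y * Cabs2 (Csub (scale t f x) (scale t f y))))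
    (fun x => t * t * lsum l (fun y => b x y * Cabs2 (Csub (f x) (f y))))).
  2:{ intros x _. rewrite <- lsum_scal. apply lsum_ext. intros y _.
      unfold Cabs2, Csub, scale; simpl; ring. }
  rewrite (lsum_ext l (fun x => c x * Cabs2 (scale t f x)) (fun x => t * t * (c x * Cabs2 (f x)))).
  2:{ intros x _. unfold Cabs2, scale; simpl; ring. }
  rewrite !lsum_scal. ring.
Qed.

Lemma Qval_ub {X} (b : X -> X -> R) c f q l : Qval b c f q -> NoDup l -> Qfin b c l f <= q.
Proof. intros [H _] Hl. apply H. exists l; auto. Qed.

Lemma Qfin_nil {X} (b : X -> X -> R) c f : Qfin b c [] f = 0.
Proof. unfold Qfin; simpl; ring. Qed.

Lemma Qval_nonneg {X} (b : X -> X -> R) c f q : Qval b c f q -> 0 <= q.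
Proof. intros H. rewrite <- (Qfin_nil b c f). apply (Qval_ub b c f q [] H). constructor. Qed.

Lemma Qval_ex {X} (b : X -> X -> R) c f M :
  (forall l, NoDup l -> Qfin b c l f <= M) -> exists q, Qval b c f q /\ q <= M.
Proof.
  intros H.
  destruct (completeness (fun v => exists l, NoDup l /\ v = Qfin b c l f)) as [q Hq].
  - exists M. intros v [l [Hl ->]]. auto.
  - exists 0, []. split; [constructor|]. rewrite Qfin_nil; auto.
  - exists q. split; auto. apply Hq. intros v [l [Hl ->]]. auto.
Qed.

Lemma Qval_scale {X} (b : X -> X -> R) c f q t :
  Qval b c f q -> Qval b c (scale t f) (t * t * q).
Proof.
  intros Hq. split.
  - intros v [l [Hl ->]]. rewrite Qfin_scale. pose proof (Qval_ub b c f q l Hq Hl). nra.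
  - intros u Hu.
    assert (H0 : 0 <= u). { apply Hu. exists []. split; [constructor|]. rewrite Qfin_nil; auto. }
    destruct (Req_dec (t * t) 0) as [Ht|Ht].
    + rewrite Ht. lra.
    + assert (Htt : 0 < t * t) by (pose proof (Rle_0_sqr t); unfold Rsqr in *; lra).
      assert (q <= u / (t * t)).
      { apply Hq. intros v [l [Hl ->]].
        assert (Qfin b c l (scale t f) <= u) by (apply Hu; exists l; auto).
        rewrite Qfin_scale in H. apply (Rmult_le_reg_l (t*t)); auto.
        assert (t <> 0) by (intro; subst; lra). replace (t * t * (u / (t * t))) with u by (field; auto). lra. }
      apply (Rmult_le_compat_l (t*t)) in H; [|lra].
      assert (t <> 0) by (intro; subst; lra). replace (t * t * (u / (t * t))) with u in H by (field; auto). lra.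
Qed.

Lemma Csub_scale {X} t (g : X -> Defs.C) x y :
  Csub (scale t g x) (scale t g y) = (t * fst (Csub (g x) (g y)), t * snd (Csub (g x) (g y))).
Proof. unfold Csub, scale; simpl. f_equal; ring. Qed.

Lemma Qval_zero {X} (b : X -> X -> R) c : Qval b c (fun _ => (0,0)) 0.
Proof.
  destruct (Qval_ex b c (fun _ => (0,0)) 0) as [q [Hq Hq0]].
  - intros l _. unfold Qfin.
    rewrite (lsum_ext l _ (fun _ => 0)).
    2:{ intros x _. rewrite (lsum_ext l _ (fun _ => 0)). apply lsum_zero.
        intros; unfold Cabs2, Csub; simpl; ring. }
    rewrite (lsum_ext l (fun x => c x * _) (fun _ => 0)).
    2:{ intros; unfold Cabs2; simpl; ring. }
    rewrite !lsum_zero. lra.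
  - pose proof (Qval_nonneg _ _ _ _ Hq). replace q with 0 in Hq by lra. auto.
Qed.

Lemma rho_K_nonneg {X} (b : X -> X -> R) c x y K : rho_le b c x y K -> 0 <= K.
Proof.
  intros H. specialize (H _ _ (Qval_zero b c) ltac:(lra)).
  simpl in H. unfold Cabs, Cabs2, Csub in H; simpl in H.
  pose proof (sqrt_pos ((0 - 0) * (0 - 0) + (0 - 0) * (0 - 0))). lra.
Qed.

Lemma ii_iii {X} (b : X -> X -> R) c :
  (exists K, forall x y : X, rho_le b c x y K) -> exists K, forall x y : X, r_le b c x y K.
Proof.
  intros [K HK]. exists (K * K). intros x y. split.
  - intros _. nra.
  - intros Hxy g q Hq Hd.
    pose proof (rho_K_nonneg b c x y K (HK x y)) as HK0.
    pose proof (Qval_nonneg _ _ _ _ Hq) as Hq0.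
    assert (Hqp : 0 < q).
    { destruct (Req_dec q 0) as [Hq00|]; [|lra]. exfalso.
      pose proof (Qval_scale b c g q (K+1) Hq) as Hs.
      specialize (HK x y _ _ Hs ltac:(rewrite Hq00; lra)).
      rewrite Csub_scale, Cabs_scale, Hd, Rabs_right in HK by lra. lra. }
    split; auto.
    set (t := / sqrt q).
    pose proof (sqrt_lt_R0 q Hqp) as Hsq.
    assert (Htq : t * t * q = 1).
    { unfold t. rewrite <- (sqrt_sqrt q) at 3 by lra. field. lra. }
    pose proof (Qval_scale b c g q t Hq) as Hs. rewrite Htq in Hs.
    specialize (HK x y _ _ Hs ltac:(lra)).
    assert (Ht0 : 0 < t) by (unfold t; apply Rinv_0_lt_compat; auto).
    rewrite Csub_scale, Cabs_scale, Hd, Rabs_right in HK by lra.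
    replace (/ q) with (t * t).
    + nra.
    + apply (Rmult_eq_reg_r q); [|lra]. rewrite Htq. field. lra.
Qed.

Lemma iii_ii {X} (b : X -> X -> R) c (x0 : X) :
  (exists K, forall x y : X, r_le b c x y K) -> exists K, forall x y : X, rho_le b c x y K.
Proof.
  intros [K HK]. assert (HK0 : 0 <= K) by (apply (proj1 (HK x0 x0)); auto).
  exists (K + 1). intros x y f q Hq Hq1.
  pose proof (Qval_nonneg _ _ _ _ Hq) as Hq0.
  set (d := Cabs (Csub (f x) (f y))).
  pose proof (Cabs_nonneg (Csub (f x) (f y))) as Hd0. fold d in Hd0.
  destruct (classic (x = y)) as [->|Hxy].
  - unfold d. rewrite Cabs_sub_self. lra.
  - destruct (Req_dec d 0) as [->|Hdn]; [lra|].
    assert (Hdp : 0 < d) by lra.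
    pose proof (Qval_scale b c f q (/ d) Hq) as Hs.
    destruct (proj2 (HK x y) Hxy _ _ Hs) as [H1 H2].
    + rewrite Csub_scale, Cabs_scale. fold d. rewrite Rabs_right.
      * field; lra.
      * left; apply Rinv_0_lt_compat; auto.
    + assert (Hqq : 0 < q).
      { destruct (Req_dec q 0) as [->|]; [|lra]. rewrite Rmult_0_r in H1. lra. }
      replace (/ (/ d * / d * q)) with (d * d / q) in H2 by (field; lra).
      assert (d * d <= K * q).
      { apply (Rmult_le_compat_r q) in H2; [|lra].
        replace (d * d / q * q) with (d * d) in H2 by (field; lra). lra. }
      nra.
Qed.

Lemma ii_i {X} (b : X -> X -> R) c (o : X) :
  (exists K, forall x y : X, rho_le b c x y K) -> canonically_compactifiable b c.
Proof.
  intros [K HK] f [q Hq].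
  pose proof (Qval_nonneg _ _ _ _ Hq) as Hq0.
  set (t := / (q + 1)).
  assert (Ht : 0 < t) by (unfold t; apply Rinv_0_lt_compat; lra).
  assert (Htq : t * t * q <= 1).
  { unfold t. replace (/ (q + 1) * / (q + 1) * q) with (q / ((q+1)*(q+1))) by (field; lra).
    unfold Rdiv. apply (Rmult_le_reg_r ((q+1)*(q+1))); [nra|]. rewrite Rmult_assoc, Rinv_l by nra. nra. }
  pose proof (Qval_scale b c f q t Hq) as Hs.
  assert (Hb : forall x, Rabs (fst (Csub (f x) (f o))) <= K * (q + 1) /\
                         Rabs (snd (Csub (f x) (f o))) <= K * (q + 1)).
  { intros x. specialize (HK x o _ _ Hs Htq). rewrite Csub_scale, Cabs_scale in HK.
    rewrite Rabs_right in HK by lra.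
    pose proof (Cabs_fst (Csub (f x) (f o))). pose proof (Cabs_snd (Csub (f x) (f o))).
    assert (Cabs (Csub (f x) (f o)) <= K * (q + 1)).
    { apply (Rmult_le_compat_l (q+1)) in HK; [|lra].
      replace ((q + 1) * (t * Cabs (Csub (f x) (f o)))) with (Cabs (Csub (f x) (f o))) in HK
        by (unfold t; field; lra). lra. }
    lra. }
  exists (Rabs (fst (f o)) + Rabs (snd (f o)) + 2 * (K * (q + 1))).
  intros x. destruct (Hb x) as [H1 H2]. unfold Csub in H1, H2; simpl in H1, H2.
  pose proof (Cabs_le_sum (f x)).
  pose proof (Rabs_triang (fst (f x) - fst (f o)) (fst (f o))).
  pose proof (Rabs_triang (snd (f x) - snd (f o)) (snd (f o))).
  replace (fst (f x) - fst (f o) + fst (f o)) with (fst (f x)) in * by ring.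
  replace (snd (f x) - snd (f o) + snd (f o)) with (snd (f x)) in * by ring.
  lra.
Qed.

Definition EB {X} (b : X -> X -> R) c (u : X -> R) M : Prop :=
  forall l, NoDup l -> Qfin b c l (emb u) <= M.

Definition Q2 {X} (b : X -> X -> R) c l (u : X -> R) : R :=
  / 2 * lsum l (fun x => lsum l (fun y => b x y * ((u x - u y) * (u x - u y))))
  + lsum l (fun x => c x * (u x * u x)).

Lemma Qfin_emb {X} (b : X -> X -> R) c l u : Qfin b c l (emb u) = Q2 b c l u.
Proof.
  unfold Qfin, Q2. f_equal.
  - f_equal. apply lsum_ext; intros x _. apply lsum_ext; intros y _.
    unfold Cabs2, Csub, emb; simpl; ring.
  - apply lsum_ext; intros x _. unfold Cabs2, emb; simpl; ring.
Qed.

Lemma EB_fst {X} (b : X -> X -> R) c f q :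
  (forall x y, 0 <= b x y) -> (forall x, 0 <= c x) ->
  Qval b c f q -> EB b c (fun x => fst (f x)) q.
Proof.
  intros Hb Hc Hq l Hl. eapply Rle_trans; [|apply (Qval_ub b c f q l Hq Hl)].
  apply Qfin_compare; auto; intros; unfold Cabs2, Csub, emb; simpl;
  first [pose proof (Rle_0_sqr (snd (f x) - snd (f y))) | pose proof (Rle_0_sqr (snd (f x)))]; unfold Rsqr in *; lra.
Qed.

Lemma EB_snd {X} (b : X -> X -> R) c f q :
  (forall x y, 0 <= b x y) -> (forall x, 0 <= c x) ->
  Qval b c f q -> EB b c (fun x => snd (f x)) q.
Proof.
  intros Hb Hc Hq l Hl. eapply Rle_trans; [|apply (Qval_ub b c f q l Hq Hl)].
  apply Qfin_compare; auto; intros; unfold Cabs2, Csub, emb; simpl;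
  first [pose proof (Rle_0_sqr (fst (f x) - fst (f y))) | pose proof (Rle_0_sqr (fst (f x)))]; unfold Rsqr in *; lra.
Qed.

Lemma EB_abs {X} (b : X -> X -> R) c u M :
  (forall x y, 0 <= b x y) -> (forall x, 0 <= c x) ->
  EB b c u M -> EB b c (fun x => Rabs (u x)) M.
Proof.
  intros Hb Hc H l Hl. eapply Rle_trans; [|apply (H l Hl)].
  apply Qfin_compare; auto; intros; unfold Cabs2, Csub, emb; simpl.
  - pose proof (Rabs_triang_inv (u x) (u y)). pose proof (Rabs_triang_inv (u y) (u x)).
    pose proof (Rabs_sq (u x - u y)). pose proof (Rabs_pos (u x - u y)).
    rewrite Rabs_minus_sym in H1. pose proof (Rabs_pos (u x)); pose proof (Rabs_pos (u y)). nra.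
  - rewrite Rabs_sq. lra.
Qed.

Lemma EB_shift {X} (b : X -> X -> R) c u M k :
  (forall x, c x = 0) -> EB b c u M -> EB b c (fun x => u x - k) M.
Proof.
  intros Hc H l Hl. specialize (H l Hl). rewrite Qfin_emb in *. unfold Q2 in *.
  rewrite (lsum_ext l (fun x => c x * (u x * u x)) (fun _ => 0)) in H by (intros; rewrite Hc; ring).
  rewrite (lsum_ext l (fun x => c x * _) (fun _ => 0)) by (intros; rewrite Hc; ring).
  erewrite (lsum_ext l (fun x => lsum l (fun y => b x y * ((u x - k - (u y - k)) * _)))); [exact H|].
  intros x _. apply lsum_ext; intros y _. f_equal. ring.
Qed.

Lemma edge_bound {X} (b : X -> X -> R) c u M x y :
  weighted_graph b c -> 0 < b x y -> EB b c u M -> b x y * ((u x - u y) * (u x - u y)) <= M.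
Proof.
  intros [Hb [Hs [H0 [_ Hc]]]] Hxy H.
  assert (Hne : x <> y) by (intros ->; rewrite H0 in Hxy; lra).
  assert (Hnd : NoDup [x; y]) by (constructor; [simpl; intuition|constructor; [simpl; auto|constructor]]).
  specialize (H _ Hnd). rewrite Qfin_emb in H. unfold Q2 in H. simpl in H.
  rewrite (Hs y x), !H0 in H. pose proof (Hc x); pose proof (Hc y). nra.
Qed.

Lemma last_default {X} (l : list X) a d1 d2 : last (a :: l) d1 = last (a :: l) d2.
Proof.
  revert a. induction l as [|y l IH]; intros a; [reflexivity|].
  change (last (y :: l) d1 = last (y :: l) d2). apply IH.
Qed.

Lemma path_bound {X} (b : X -> X -> R) c :
  weighted_graph b c -> forall p x, chain b x p ->
  exists C, forall u, EB b c u 1 -> Rabs (u x - u (last (x :: p) x)) <= C.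
Proof.
  intros Hg p. induction p as [|y p IH]; intros x Hch.
  - exists 0. intros u _. simpl. rewrite Rminus_diag, Rabs_R0. lra.
  - destruct Hch as [Hxy Hch]. destruct (IH y Hch) as [C HC].
    exists (/ b x y + 1 + C). intros u Hu.
    assert (Hl : last (x :: y :: p) x = last (y :: p) y) by (simpl; apply last_default).
    rewrite Hl. specialize (HC u Hu).
    pose proof (edge_bound b c u 1 x y Hg Hxy Hu) as He.
    assert (Hd : Rabs (u x - u y) <= / b x y + 1).
    { assert ((u x - u y) * (u x - u y) <= / b x y).
      { apply (Rmult_le_reg_l (b x y)); auto. rewrite Rinv_r by lra. lra. }
      pose proof (Rabs_sq (u x - u y)). pose proof (Rabs_pos (u x - u y)).
      pose proof (Rinv_0_lt_compat _ Hxy). nra. }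
    pose proof (Rabs_triang (u x - u y) (u y - u (last (y :: p) y))).
    replace (u x - u y + (u y - u (last (y :: p) y))) with (u x - u (last (y :: p) y)) in H by ring.
    lra.
Qed.

Lemma conn_bound {X} (b : X -> X -> R) c (o : X) :
  weighted_graph b c -> connected b ->
  forall x, exists C, forall u, EB b c u 1 -> Rabs (u x - u o) <= C.
Proof.
  intros Hg Hconn x. destruct (classic (x = o)) as [->|Hne].
  - exists 0. intros. rewrite Rminus_diag, Rabs_R0. lra.
  - destruct (Hconn o x (fun e => Hne (eq_sym e))) as [p [_ [Hch Hl]]].
    destruct (path_bound b c Hg p o Hch) as [C HC]. exists C. intros u Hu.
    specialize (HC u Hu). rewrite Hl, Rabs_minus_sym in HC. auto.
Qed.

Lemma not_ii_witness {X} (b : X -> X -> R) c :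
  ~ (exists K, forall x y : X, rho_le b c x y K) ->
  forall K, exists x y f q, Qval b c f q /\ q <= 1 /\ K < Cabs (Csub (f x) (f y)).
Proof.
  intros H K. apply NNPP. intros Hn. apply H. exists K.
  intros x y f q Hq Hq1. apply Rnot_lt_le. intros Hlt. apply Hn. eauto 10.
Qed.

Lemma real_witness {X} (b : X -> X -> R) c :
  (forall x y, 0 <= b x y) -> (forall x, 0 <= c x) ->
  ~ (exists K, forall x y : X, rho_le b c x y K) ->
  forall K, exists u x y, EB b c u 1 /\ K < Rabs (u x - u y).
Proof.
  intros Hb Hc H K. destruct (not_ii_witness b c H (2 * K)) as [x [y [f [q [Hq [Hq1 Hlt]]]]]].
  pose proof (Cabs_le_sum (Csub (f x) (f y))) as Hs. unfold Csub in Hs, Hlt; simpl in Hs, Hlt.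
  destruct (Rlt_le_dec K (Rabs (fst (f x) - fst (f y)))) as [H1|H1].
  - exists (fun x => fst (f x)), x, y. split; auto.
    intros l Hl. eapply Rle_trans; [apply (EB_fst b c f q Hb Hc Hq l Hl)|lra].
  - exists (fun x => snd (f x)), x, y. split; [|cbv beta; lra].
    intros l Hl. eapply Rle_trans; [apply (EB_snd b c f q Hb Hc Hq l Hl)|lra].
Qed.

Lemma real_witness_o {X} (b : X -> X -> R) c (o : X) :
  (forall x y, 0 <= b x y) -> (forall x, 0 <= c x) ->
  ~ (exists K, forall x y : X, rho_le b c x y K) ->
  forall K, exists u z, EB b c u 1 /\ K < Rabs (u z - u o).
Proof.
  intros Hb Hc H K. destruct (real_witness b c Hb Hc H (2 * K)) as [u [x [y [Hu Hlt]]]].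
  pose proof (Rabs_triang (u x - u o) (u o - u y)).
  replace (u x - u o + (u o - u y)) with (u x - u y) in H0 by ring.
  rewrite (Rabs_minus_sym (u o) (u y)) in H0.
  destruct (Rlt_le_dec K (Rabs (u x - u o))).
  - exists u, x; auto.
  - exists u, y. split; auto. lra.
Qed.

Lemma normalized_witness {X} (b : X -> X -> R) c (o0 : X) :
  weighted_graph b c ->
  ~ (exists K, forall x y : X, rho_le b c x y K) ->
  exists o A, 0 <= A /\ forall K, exists w z, (forall x, 0 <= w x) /\ EB b c w 1 /\ w o <= A /\ K < w z.
Proof.
  intros Hg H. pose proof Hg as [Hb [Hsy [H0 [_ Hc]]]].
  destruct (classic (exists o, 0 < c o)) as [[o Ho]|Hno].
  - exists o, (/ c o + 1). pose proof (Rinv_0_lt_compat _ Ho). split; [lra|].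
    intros K. destruct (real_witness_o b c o Hb Hc H (K + (/ c o + 1))) as [u [z [Hu Hlt]]].
    exists (fun x => Rabs (u x)), z. split; [intros; apply Rabs_pos|]. split; [apply EB_abs; auto|].
    assert (Huo : Rabs (u o) <= / c o + 1).
    { assert (Hnd : NoDup [o]) by (constructor; [simpl; auto|constructor]).
      specialize (Hu _ Hnd). rewrite Qfin_emb in Hu. unfold Q2 in Hu. simpl in Hu.
      rewrite H0 in Hu.
      assert (u o * u o <= / c o).
      { apply (Rmult_le_reg_l (c o)); auto. rewrite Rinv_r by lra. lra. }
      pose proof (Rabs_sq (u o)). pose proof (Rabs_pos (u o)). nra. }
    split; auto.
    cbv beta. pose proof (Rabs_triang (u z) (- u o)) as Ht. rewrite Rabs_Ropp in Ht. unfold Rminus in Hlt. lra.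
  - assert (Hc0 : forall x, c x = 0).
    { intros x. destruct (Hc x) as [Hp|]; auto. exfalso; apply Hno; eauto. }
    exists o0, 0. split; [lra|]. intros K.
    destruct (real_witness_o b c o0 Hb Hc H K) as [u [z [Hu Hlt]]].
    exists (fun x => Rabs (u x - u o0)), z. split; [intros; apply Rabs_pos|].
    split; [apply EB_abs; auto; apply EB_shift; auto|].
    split; auto. rewrite Rminus_diag, Rabs_R0. lra.
Qed.

Lemma geom_sum N : sum_f_R0 (fun n => / 2 ^ S n) N = 1 - / 2 ^ S N.
Proof.
  induction N.
  - simpl. field.
  - rewrite tech5, IHN. pose proof (pow_lt 2 (S N) ltac:(lra)).
    change (2 ^ S (S N)) with (2 * 2 ^ S N). field. lra.
Qed.

Lemma sum_nonneg (a : nat -> R) N : (forall n, 0 <= a n) -> 0 <= sum_f_R0 a N.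
Proof. intros H. induction N; simpl; auto. specialize (H (S N)). lra. Qed.

Lemma CS_sum (a d : nat -> R) N : (forall n, 0 <= a n) ->
  sum_f_R0 (fun n => a n * d n) N * sum_f_R0 (fun n => a n * d n) N <=
  sum_f_R0 a N * sum_f_R0 (fun n => a n * (d n * d n)) N.
Proof.
  intros Ha. induction N.
  - simpl. specialize (Ha O). nra.
  - rewrite !tech5.
    set (S0 := sum_f_R0 a N) in *. set (T := sum_f_R0 (fun n => a n * d n) N) in *.
    set (U := sum_f_R0 (fun n => a n * (d n * d n)) N) in *.
    assert (HS : 0 <= S0) by (apply sum_nonneg; auto).
    assert (HU : 0 <= U) by (apply sum_nonneg; intros; specialize (Ha n); nra).
    specialize (Ha (S N)). set (an := a (S N)) in *. set (dn := d (S N)) in *.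
    assert (Key : 2 * dn * T <= S0 * (dn * dn) + U).
    { destruct (Req_dec S0 0) as [H0|H0].
      - rewrite H0, Rmult_0_l in IHN. assert (HT : T = 0). { apply Rsqr_0_uniq. pose proof (Rle_0_sqr T). unfold Rsqr in *. lra. } rewrite HT, H0. nra.
      - assert (0 < S0) by lra.
        assert (S0 * (2 * dn * T) <= S0 * (S0 * (dn * dn) + U)).
        { assert (Hq : 0 <= (S0 * dn - T) * (S0 * dn - T)) by (pose proof (Rle_0_sqr (S0 * dn - T)); unfold Rsqr in *; lra).
          replace ((S0 * dn - T) * (S0 * dn - T)) with (S0 * (S0 * (dn * dn)) - S0 * (2 * dn * T) + T * T) in Hq by ring.
          replace (S0 * (S0 * (dn * dn) + U)) with (S0 * (S0 * (dn * dn)) + S0 * U) by ring. lra. }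
        apply (Rmult_le_reg_l S0); auto. }
    nra.
Qed.

Lemma jensen (a d : nat -> R) N : (forall n, 0 <= a n) -> sum_f_R0 a N <= 1 ->
  sum_f_R0 (fun n => a n * d n) N * sum_f_R0 (fun n => a n * d n) N <=
  sum_f_R0 (fun n => a n * (d n * d n)) N.
Proof.
  intros Ha H1. pose proof (CS_sum a d N Ha).
  assert (0 <= sum_f_R0 (fun n => a n * (d n * d n)) N) by (apply sum_nonneg; intros; specialize (Ha n); nra).
  assert (0 <= sum_f_R0 a N) by (apply sum_nonneg; auto). nra.
Qed.

Lemma Q2_sum {X} (b : X -> X -> R) c l (a : nat -> R) (w : nat -> X -> R) N :
  (forall x y, 0 <= b x y) -> (forall x, 0 <= c x) ->
  (forall n, 0 <= a n) -> sum_f_R0 a N <= 1 ->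
  Q2 b c l (fun x => sum_f_R0 (fun n => a n * w n x) N) <=
  sum_f_R0 (fun n => a n * Q2 b c l (w n)) N.
Proof.
  intros Hb Hc Ha H1. unfold Q2.
  set (D := fun n => lsum l (fun x => lsum l (fun y => b x y * ((w n x - w n y) * (w n x - w n y))))).
  set (E := fun n => lsum l (fun x => c x * (w n x * w n x))).
  rewrite (sum_eq _ (fun n => a n * D n * / 2 + a n * E n)) by (intros; unfold D, E; ring).
  rewrite sum_plus, <- scal_sum.
  assert (HD : sum_f_R0 (fun n => a n * D n) N =
     lsum l (fun x => lsum l (fun y => sum_f_R0 (fun n => a n * (b x y * ((w n x - w n y) * (w n x - w n y)))) N))).
  { rewrite (lsum_ext l _ (fun x => sum_f_R0 (fun n => lsum l (fun y => a n * (b x y * ((w n x - w n y) * (w n x - w n y))))) N)).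
    2:{ intros x _. apply (lsum_sum_f l (fun n y => a n * (b x y * ((w n x - w n y) * (w n x - w n y))))). }
    rewrite (lsum_sum_f l (fun n x => lsum l (fun y => a n * (b x y * ((w n x - w n y) * (w n x - w n y)))))).
    apply sum_eq. intros n _. unfold D. rewrite <- lsum_scal. apply lsum_ext. intros x _.
    rewrite <- lsum_scal. reflexivity. }
  assert (HE : sum_f_R0 (fun n => a n * E n) N =
     lsum l (fun x => sum_f_R0 (fun n => a n * (c x * (w n x * w n x))) N)).
  { rewrite (lsum_sum_f l (fun n x => a n * (c x * (w n x * w n x)))).
    apply sum_eq. intros n _. unfold E. rewrite <- lsum_scal. reflexivity. }
  rewrite HD, HE.
  assert (P1 : lsum l (fun x => lsum l (fun y => b x y *
     ((sum_f_R0 (fun n => a n * w n x) N - sum_f_R0 (fun n => a n * w n y) N) *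
      (sum_f_R0 (fun n => a n * w n x) N - sum_f_R0 (fun n => a n * w n y) N)))) <=
     lsum l (fun x => lsum l (fun y => sum_f_R0 (fun n => a n * (b x y * ((w n x - w n y) * (w n x - w n y)))) N))).
  { apply lsum_le; intros x _; apply lsum_le; intros y _.
    rewrite <- minus_sum.
    rewrite (sum_eq _ (fun n => a n * (w n x - w n y))) by (intros; ring).
    rewrite (sum_eq (fun n => a n * (b x y * _)) (fun n => a n * ((w n x - w n y) * (w n x - w n y)) * b x y))
      by (intros; ring).
    rewrite <- scal_sum.
    pose proof (jensen a (fun n => w n x - w n y) N Ha H1). specialize (Hb x y).
    cbv beta in H. apply Rmult_le_compat_l; auto. }
  assert (P2 : lsum l (fun x => c x * (sum_f_R0 (fun n => a n * w n x) N * sum_f_R0 (fun n => a n * w n x) N)) <=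
     lsum l (fun x => sum_f_R0 (fun n => a n * (c x * (w n x * w n x))) N)).
  { apply lsum_le; intros x _.
    rewrite (sum_eq (fun n => a n * (c x * _)) (fun n => a n * (w n x * w n x) * c x)) by (intros; ring).
    rewrite <- scal_sum.
    pose proof (jensen a (fun n => w n x) N Ha H1). specialize (Hc x).
    cbv beta in H. apply Rmult_le_compat_l; auto. }
  lra.
Qed.

Lemma Q2_cv {X} (b : X -> X -> R) c l (S : nat -> X -> R) F :
  (forall x, Un_cv (fun N => S N x) (F x)) -> Un_cv (fun N => Q2 b c l (S N)) (Q2 b c l F).
Proof.
  intros H. unfold Q2. apply CV_plus.
  - apply CV_mult; [apply CV_const|].
    apply (lsum_cv l (fun N x => lsum l (fun y => b x y * ((S N x - S N y) * (S N x - S N y))))).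
    intros x. apply (lsum_cv l (fun N y => b x y * ((S N x - S N y) * (S N x - S N y)))).
    intros y. apply CV_mult; [apply CV_const|]. apply CV_mult; apply CV_minus; auto.
  - apply (lsum_cv l (fun N x => c x * (S N x * S N x))).
    intros x. apply CV_mult; [apply CV_const|]. apply CV_mult; auto.
Qed.

Lemma last_term_le (g : nat -> R) N : (forall n, 0 <= g n) -> g N <= sum_f_R0 g N.
Proof.
  intros H. destruct N; simpl; [lra|]. pose proof (sum_nonneg g N H). lra.
Qed.

Lemma i_ii {X} (b : X -> X -> R) c (o0 : X) :
  weighted_graph b c -> connected b -> canonically_compactifiable b c ->
  exists K, forall x y : X, rho_le b c x y K.
Proof.
  intros Hg Hconn Hcc. apply NNPP; intro Hn.
  destruct (normalized_witness b c o0 Hg Hn) as [o [A [HA HW]]].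
  pose proof Hg as [Hb [_ [_ [_ Hc]]]].
  assert (Hch : forall n : nat, {wz : (X -> R) * X | (forall x, 0 <= fst wz x) /\ EB b c (fst wz) 1 /\
       fst wz o <= A /\ 2 ^ S n * INR n < fst wz (snd wz)}).
  { intros n. apply constructive_indefinite_description.
    destruct (HW (2 ^ S n * INR n)) as [w [z Hw]]. exists (w, z). exact Hw. }
  pose (W := fun n => fst (proj1_sig (Hch n))). pose (Z := fun n => snd (proj1_sig (Hch n))).
  assert (HWp : forall n, (forall x, 0 <= W n x) /\ EB b c (W n) 1 /\ W n o <= A /\
       2 ^ S n * INR n < W n (Z n)) by (intros n; exact (proj2_sig (Hch n))).
  clearbody W Z. clear Hch.
  pose (a := fun n : nat => / 2 ^ S n).
  assert (Hpa : forall n, 0 < 2 ^ S n) by (intros; apply pow_lt; lra).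
  assert (Ha : forall n, 0 <= a n) by (intros; unfold a; left; apply Rinv_0_lt_compat; auto).
  assert (Ha1 : forall N, sum_f_R0 a N <= 1).
  { intros N. unfold a. rewrite geom_sum.
    assert (0 < / 2 ^ S N) by (apply Rinv_0_lt_compat; auto). lra. }
  pose (Sp := fun N x => sum_f_R0 (fun n => a n * W n x) N).
  assert (Hgrow : forall x, Un_growing (fun N => Sp N x)).
  { intros x N. unfold Sp. rewrite tech5. pose proof (Ha (S N)); pose proof (proj1 (HWp (S N)) x). nra. }
  assert (Hbd : forall x, has_ub (fun N => Sp N x)).
  { intros x. destruct (conn_bound b c o Hg Hconn x) as [Cx HC].
    assert (HCx : 0 <= Cx).
    { destruct (HWp O) as [_ [HE _]]. specialize (HC _ HE). pose proof (Rabs_pos (W O x - W O o)). lra. }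
    exists (A + Cx). intros v [N ->]. unfold Sp.
    apply Rle_trans with (sum_f_R0 (fun n => a n * (A + Cx)) N).
    - apply sum_Rle. intros n _. destruct (HWp n) as [Hn0 [HnE [Hno _]]]. specialize (HC _ HnE).
      apply Rmult_le_compat_l; auto. pose proof (Rle_abs (W n x - W n o)). lra.
    - rewrite <- scal_sum. specialize (Ha1 N). pose proof (sum_nonneg a N Ha). nra. }
  assert (HF : forall x, {L | Un_cv (fun N => Sp N x) L}) by (intros x; apply growing_cv; auto).
  pose (F := fun x => proj1_sig (HF x)).
  assert (HFc : forall x, Un_cv (fun N => Sp N x) (F x)) by (intros; exact (proj2_sig (HF x))).
  clearbody F.
  assert (HFE : forall l, NoDup l -> Qfin b c l (emb F) <= 1).
  { intros l Hl. rewrite Qfin_emb.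
    eapply Rle_cv_lim; [| apply (Q2_cv b c l Sp F); auto | apply (CV_const 1)].
    intros N. unfold Sp. eapply Rle_trans; [apply Q2_sum; auto|].
    apply Rle_trans with (sum_f_R0 a N); auto. apply sum_Rle; intros n _.
    destruct (HWp n) as [_ [HnE _]]. specialize (HnE l Hl). rewrite Qfin_emb in HnE.
    pose proof (Ha n). nra. }
  destruct (Qval_ex b c (emb F) 1 HFE) as [q [Hq _]].
  destruct (Hcc (emb F) (ex_intro _ q Hq)) as [M HM].
  destruct (INR_unbounded M) as [n Hnn].
  specialize (HM (Z n)). unfold emb in HM. rewrite Cabs_real in HM.
  pose proof (growing_ineq (fun N => Sp N (Z n)) (F (Z n)) (Hgrow _) (HFc _) n) as H1.
  pose proof (last_term_le (fun k => a k * W k (Z n)) n) as H2.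
  assert (H2' : a n * W n (Z n) <= Sp n (Z n)).
  { apply H2. intros k. pose proof (Ha k); pose proof (proj1 (HWp k) (Z n)). nra. }
  destruct (HWp n) as [_ [_ [_ HK]]].
  assert (H3 : INR n < a n * W n (Z n)).
  { replace (INR n) with (a n * (2 ^ S n * INR n)) by (unfold a; field; specialize (Hpa n); lra).
    apply Rmult_lt_compat_l; auto. unfold a. apply Rinv_0_lt_compat; auto. }
  pose proof (Rle_abs (F (Z n))). lra.
Qed.

Lemma i_iv {X} (b : X -> X -> R) c (o : X) :
  (forall x, c x = 0) -> weighted_graph b c -> canonically_compactifiable b c ->
  forall (m : X -> R) (s : X -> X -> R),
    measure m -> finite_measure m -> pseudometric s -> intrinsic b m s ->
    exists K, forall x y : X, s x y <= K.
Proof.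
  intros Hc0 Hg Hcc m s Hm [M HM] [Hs0 [Hsxx [Hsym Htri]]] Hint.
  pose proof Hg as [Hb _].
  set (u := fun x => s o x).
  assert (HE : forall l, NoDup l -> Qfin b c l (emb u) <= M).
  { intros l Hl. rewrite Qfin_emb. unfold Q2.
    rewrite (lsum_ext l (fun x => c x * _) (fun _ => 0)) by (intros; rewrite Hc0; ring).
    rewrite lsum_zero, Rplus_0_r.
    eapply Rle_trans; [|apply (HM l Hl)].
    rewrite <- lsum_scal. apply lsum_le. intros x _.
    eapply Rle_trans; [|apply (Hint x l Hl)].
    apply Rmult_le_compat_l; [lra|]. apply lsum_le. intros y _.
    apply Rmult_le_compat_l; auto. unfold u.
    pose proof (Htri o x y); pose proof (Htri o y x); pose proof (Hsym x y); pose proof (Hs0 x y).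
    simpl. nra. }
  destruct (Qval_ex b c (emb u) M HE) as [q [Hq _]].
  destruct (Hcc _ (ex_intro _ q Hq)) as [B HB].
  exists (2 * B). intros x y.
  pose proof (HB x) as H1; pose proof (HB y) as H2. unfold emb, u in H1, H2.
  rewrite Cabs_real in H1, H2. pose proof (Rle_abs (s o x)); pose proof (Rle_abs (s o y)).
  pose proof (Htri x o y). rewrite (Hsym x o) in H3. lra.
Qed.

Definition En {X} (e : nat -> X) N : list X := map e (seq 0 (S N)).

Lemma En_NoDup {X} (e : nat -> X) N : (forall n m, e n = e m -> n = m) -> NoDup (En e N).
Proof.
  intros Hinj. unfold En. apply NoDup_map_NoDup_ForallPairs; [|apply seq_NoDup].
  intros x y _ _. apply Hinj.
Qed.

Lemma In_En {X} (e : nat -> X) N x : In x (En e N) <-> exists k, (k <= N)%nat /\ e k = x.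
Proof.
  unfold En. rewrite in_map_iff. split.
  - intros [k [Hk Hin]]. apply in_seq in Hin. exists k. split; [lia|auto].
  - intros [k [Hk Hx]]. exists k. split; auto. apply in_seq. lia.
Qed.

Lemma En_mono {X} (e : nat -> X) N N' : (N <= N')%nat -> incl (En e N) (En e N').
Proof.
  intros H x Hx. apply In_En in Hx as [k [Hk Hx]]. apply In_En. exists k. split; auto; lia.
Qed.

Lemma En_cover {X} (e : nat -> X) : (forall x, exists n, e n = x) ->
  forall l, exists N, incl l (En e N).
Proof.
  intros Hs l. induction l as [|a l [N HN]].
  - exists O. intros x [].
  - destruct (Hs a) as [k Hk]. exists (Nat.max N k). intros x [<-|Hx].
    + apply In_En. exists k. split; auto; lia.
    + apply (En_mono e N); [lia|]. auto.
Qed.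

Lemma real_bounded {X} (b : X -> X -> R) c (e : nat -> X) u Q :
  (forall x, c x = 0) -> weighted_graph b c ->
  (forall n m, e n = e m -> n = m) -> (forall x, exists n, e n = x) ->
  (forall (m : X -> R) (s : X -> X -> R),
    measure m -> finite_measure m -> pseudometric s -> intrinsic b m s ->
    exists K, forall x y : X, s x y <= K) ->
  EB b c u Q -> exists B, forall x, Rabs (u x) <= B.
Proof.
  intros Hc0 Hg Hinj Hsurj Hiv HE. pose proof Hg as [Hb _].
  set (row := fun x y => b x y * ((u x - u y) * (u x - u y))).
  assert (Hrow : forall x y, 0 <= row x y). { intros x y; unfold row; cbv beta. pose proof (Hb x y). pose proof (Rle_0_sqr (u x - u y)). unfold Rsqr in *. apply Rmult_le_pos; auto. }
  set (P := fun N x => / 2 * lsum (En e N) (row x)).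
  assert (HP0 : forall N x, 0 <= P N x).
  { intros. unfold P. apply Rmult_le_pos; [lra|]. apply lsum_nonneg; auto. }
  assert (HPmono : forall N N' x, (N <= N')%nat -> P N x <= P N' x).
  { intros N N' x H. unfold P. apply Rmult_le_compat_l; [lra|].
    apply lsum_incl; auto; [apply En_NoDup; auto|apply En_mono; auto]. }
  assert (HQ2 : forall N, Q2 b c (En e N) u = lsum (En e N) (P N)).
  { intros N. unfold Q2, P.
    rewrite (lsum_ext _ (fun x => c x * _) (fun _ => 0)) by (intros; rewrite Hc0; ring).
    rewrite lsum_zero, Rplus_0_r, lsum_scal. reflexivity. }
  assert (HPQ : forall N x, In x (En e N) -> P N x <= Q).
  { intros N x Hx. specialize (HE _ (En_NoDup e N Hinj)). rewrite Qfin_emb, HQ2 in HE.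
    eapply Rle_trans; [|exact HE]. apply lsum_in; auto. }
  assert (Hgrow : forall x, Un_growing (fun N => P N x)).
  { intros x N. apply HPmono. lia. }
  assert (Hbd : forall x, has_ub (fun N => P N x)).
  { intros x. destruct (En_cover e Hsurj [x]) as [N0 HN0].
    exists Q. intros v [N ->].
    apply Rle_trans with (P (Nat.max N N0) x); [apply HPmono; lia|].
    apply HPQ. apply (En_mono e N0); [lia|]. apply HN0. left; auto. }
  assert (Hm : forall x, {L | Un_cv (fun N => P N x) L}) by (intros x; apply growing_cv; auto).
  pose (m := fun x => proj1_sig (Hm x)).
  assert (Hmc : forall x, Un_cv (fun N => P N x) (m x)) by (intros; exact (proj2_sig (Hm x))).
  clearbody m.
  assert (HmP : forall N x, P N x <= m x) by (intros; apply (growing_ineq (fun N => P N x)); auto).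
  set (s := fun x y => Rabs (u x - u y)).
  destruct (Hiv m s) as [K HK].
  - intros x. eapply Rle_trans; [apply (HP0 O x)|apply HmP].
  - exists Q. intros L HL. destruct (En_cover e Hsurj L) as [N HN].
    apply Rle_trans with (lsum (En e N) m).
    { apply lsum_incl; auto. intros x. eapply Rle_trans; [apply (HP0 O x)|apply HmP]. }
    eapply Rle_cv_lim; [| apply (lsum_cv (En e N) P m Hmc) | apply (CV_const Q)].
    intros N'. cbv beta.
    apply Rle_trans with (lsum (En e N) (P (Nat.max N N'))).
    { apply lsum_le. intros; apply HPmono; lia. }
    apply Rle_trans with (lsum (En e (Nat.max N N')) (P (Nat.max N N'))).
    { apply lsum_incl; auto; [apply En_NoDup; auto|apply En_mono; lia]. }
    rewrite <- HQ2, <- Qfin_emb. apply HE. apply En_NoDup; auto.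
  - unfold s. split; [intros; apply Rabs_pos|]. split; [intros; rewrite Rminus_diag, Rabs_R0; auto|].
    split; [intros; apply Rabs_minus_sym|].
    intros x y z. pose proof (Rabs_triang (u x - u y) (u y - u z)).
    replace (u x - u y + (u y - u z)) with (u x - u z) in H by ring. auto.
  - intros x l Hl. destruct (En_cover e Hsurj l) as [N HN].
    eapply Rle_trans; [|apply (HmP N x)]. unfold P. apply Rmult_le_compat_l; [lra|].
    apply Rle_trans with (lsum l (row x)).
    + apply Req_le. apply lsum_ext. intros y _. unfold row, s. simpl. rewrite Rmult_1_r, Rabs_sq. reflexivity.
    + apply lsum_incl; auto.
  - exists (Rabs (u (e O)) + K). intros x. specialize (HK x (e O)). unfold s in HK.
    pose proof (Rabs_triang (u x - u (e O)) (u (e O))).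
    replace (u x - u (e O) + u (e O)) with (u x) in H by ring. lra.
Qed.

Lemma iv_i {X} (b : X -> X -> R) c :
  (forall x, c x = 0) -> weighted_graph b c -> countably_infinite X ->
  (forall (m : X -> R) (s : X -> X -> R),
    measure m -> finite_measure m -> pseudometric s -> intrinsic b m s ->
    exists K, forall x y : X, s x y <= K) ->
  canonically_compactifiable b c.
Proof.
  intros Hc0 Hg [e [Hinj Hsurj]] Hiv f [q Hq].
  pose proof Hg as [Hb [_ [_ [_ Hc]]]].
  destruct (real_bounded b c e (fun x => fst (f x)) q Hc0 Hg Hinj Hsurj Hiv (EB_fst b c f q Hb Hc Hq)) as [B1 H1].
  destruct (real_bounded b c e (fun x => snd (f x)) q Hc0 Hg Hinj Hsurj Hiv (EB_snd b c f q Hb Hc Hq)) as [B2 H2].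
  exists (B1 + B2). intros x. pose proof (Cabs_le_sum (f x)). specialize (H1 x); specialize (H2 x). lra.
Qed.

Theorem mainTheorem7 (X : Type) (b : X -> X -> R) (c : X -> R)
  (HX : countably_infinite X) (Hg : weighted_graph b c) (Hconn : connected b) :
  (canonically_compactifiable b c <->
     exists K, forall x y : X, rho_le b c x y K) /\
  ((exists K, forall x y : X, rho_le b c x y K) <->
     exists K, forall x y : X, r_le b c x y K) /\
  ((forall x, c x = 0) ->
     (canonically_compactifiable b c <->
        forall (m : X -> R) (s : X -> X -> R),
          measure m -> finite_measure m -> pseudometric s -> intrinsic b m s ->
          exists K, forall x y : X, s x y <= K)).
Proof.
  pose proof HX as [e _].
  split; [split; [apply (i_ii b c (e O) Hg Hconn)|apply (ii_i b c (e O))]|].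
  split; [split; [apply ii_iii|apply (iii_ii b c (e O))]|].
  intros Hc0. split.
  - apply (i_iv b c (e O) Hc0 Hg).
  - apply (iv_i b c Hc0 Hg HX).
Qed.
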